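(* Let $n$ and $k$ be integers with $1 \le k < n$, and let $0 \le r \le k-1$. Consider a set of $n$ items, of which $k$ are ''observed'' and carry a total order (partial ranking) $\beta_1 \succ \beta_2 \succ \cdots \succ \beta_k$, and the remaining $n-k$ items are ''unobserved''. Let $j = \beta_{r+1}$ be the observed item having exactly $r$ observed items ranked above it, and let $i$ be an unobserved item. Call a complete ranking (total order) of all $n$ items compatible with $\beta$ if its restriction to the observed items coincides with $\beta_1 \succ \cdots \succ \beta_k$. Then the proportion of complete rankings compatible with $\beta$ in which $i \succ j$ equals $$p(n,k,r) = \frac{1}{t(n,k)} \sum_{s=0}^{n-k-1} V^{s}_{n-k-1}\,(s+1)\, S^{r}_{s+1}\,(n-k-s-1)!\, S^{n-k-s-1}_{k-r-1},$$ where $t(n,k) = (n-k)!\, S^{k}_{n-k}$ is the total number of complete rankings compatible with $\beta$, $S^a_b = \frac{(a+b)!}{a!\,b!}$ is the number of shuffles of two lists of lengths $a$ and $b$ (interleavings preserving the relative order within each list), and $V^a_b = \frac{b!}{(b-a)!}$ is the number of ordered selections of $a$ objects out of $b$.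
   Context: A ranking $\pi_1 \succ \pi_2 \succ \cdots$ means $\pi_1$ is ranked best. A partial ranking is a total order on a subset of the items; a complete ranking compatible with it is a linear extension, i.e., a total order on all items that preserves the relative order of the partially ranked items. *)

(* Defs.v *)
From mathcomp Require Import all_boot all_order all_algebra all_fingroup.
Set Implicit Arguments. Unset Strict Implicit. Unset Printing Implicit Defensive.
Import GRing.Theory Num.Theory.
Local Open Scope ring_scope.

(* A complete ranking of the items 'I_n is a permutation sigma, where
   sigma x is the position of item x (position 0 = ranked best).
   So "x ≻ y" (x ranked above y) means sigma x < sigma y. *)

(* The partial ranking beta_1 ≻ ... ≻ beta_k is an injection beta : 'I_k -> 'I_n
   (beta a is the item at observed position a, 0-based). *)
Definition compatible (n k : nat) (beta : 'I_k -> 'I_n) (sigma : {perm 'I_n}) : bool :=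
  [forall a : 'I_k, forall b : 'I_k, (a < b)%N ==> (sigma (beta a) < sigma (beta b))%N].

Definition Sh (a b : nat) : rat := ((a + b)`!)%:R / ((a`!)%:R * (b`!)%:R).
Definition V (a b : nat) : rat := (b`!)%:R / (((b - a)%N)`!)%:R.

Definition t (n k : nat) : rat := ((n - k)%N`!)%:R * Sh k (n - k).

Definition p (n k r : nat) : rat :=
  (t n k)^-1 * \sum_(s < n - k)
     (V s (n - k - 1) * (s.+1)%:R * Sh r s.+1 * ((n - k - s - 1)%N`!)%:R
       * Sh (n - k - s - 1) (k - r - 1)).

(* Main.v *)
Require Import Defs.
From mathcomp Require Import all_boot all_order all_algebra all_fingroup.
From mathcomp Require Import zify ring lra.
Set Implicit Arguments. Unset Strict Implicit. Unset Printing Implicit Defensive.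
Import GRing.Theory Num.Theory.
Local Open Scope ring_scope.

Lemma binC x y : 'C(x+y, x) = 'C(x+y, y).
Proof. by rewrite -bin_sub ?leq_addr // addKn. Qed.

Lemma vdu a b t : (\sum_(s < t.+1) 'C(a+s, a) * 'C(b+(t-s), b) = 'C((a+b+t).+1, t))%N.
Proof.
elim: b t => [|b IHb] t.
  under eq_bigr do rewrite add0n bin0 muln1.
  elim: t => [|t IHt]; first by rewrite big_ord1 !addn0 binn bin0.
  rewrite big_ord_recr /= IHt !addn0 binS addnC; congr (_ + _)%N.
    by rewrite binC !addnS.
  by rewrite addnS.
elim: t => [|t IHt].
  by rewrite big_ord1 subnn !addn0 !binn bin0.
rewrite big_ord_recr /= subnn addn0 binn muln1.
have E : forall s : 'I_t.+1, ('C(a+s, a) * 'C(b.+1+(t.+1-s), b.+1)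
   = 'C(a+s, a) * 'C(b.+1+(t-s), b.+1) + 'C(a+s,a) * 'C(b+(t.+1-s), b))%N.
  move=> s; have Hs := ltn_ord s.
  have -> : (b.+1 + (t.+1 - s) = (b.+1 + (t - s)).+1)%N by lia.
  rewrite binS mulnDr; congr (_ + _ * 'C(_,_))%N; lia.
rewrite (eq_bigr _ (fun s _ => E s)) big_split /= IHt -addnA.
have := IHb t.+1; rewrite big_ord_recr /= subnn addn0 binn muln1 => ->.
have -> : ((a + b.+1 + t).+1 = (a+b+t.+1).+1)%N by lia.
rewrite [X in _ = X]binS addnC.
by have -> : (a + b.+1 + t.+1 = (a+b+t.+1).+1)%N by lia.
Qed.

Lemma ShE x y : Sh x y = ('C(x+y, x))%:R.
Proof.
rewrite /Sh -(bin_fact (leq_addr y x)) addKn natrM natrM mulfK //.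
by rewrite mulf_neq0 // pnatr_eq0 -lt0n fact_gt0.
Qed.


Lemma p_val n k r : (r < k)%N -> (k < n)%N -> p n k r = (r.+1)%:R / (k.+1)%:R.
Proof.
move=> rk kn.
have [b Hk] : exists b, k = (r.+1 + b)%N by exists (k - r.+1)%N; lia.
have [m Hn] : exists m, n = (k + m.+1)%N by exists (n - k.+1)%N; lia.
rewrite /p /t.
have -> : (n - k = m.+1)%N by lia.
have -> : (m.+1 - 1 = m)%N by lia.
have -> : (k - r - 1 = b)%N by lia.
have E : forall s : 'I_m.+1,
  V s m * (s.+1)%:R * Sh r s.+1 * ((m.+1 - s - 1)`!)%:R * Sh (m.+1 - s - 1) b
  = (m`! * r.+1 * ('C(r.+1 + s, r.+1) * 'C(b + (m - s), b)))%:R.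
  move=> s; have Hs := ltn_ord s.
  have -> : (m.+1 - s - 1 = m - s)%N by lia.
  have h1 : (s.+1 * 'C(r + s.+1, r) = r.+1 * 'C(r.+1+s, r.+1))%N.
    have -> : (r.+1 + s = r + s.+1)%N by lia.
    rewrite mul_bin_left; congr (_ * 'C(_,_))%N; lia.
  have h2 : 'C(m - s + b, m - s) = 'C(b + (m-s), b) by rewrite binC addnC.
  rewrite !ShE /V h2 -(mulrA _ (s.+1)%:R) -natrM h1.
  have h : (((m - s)`!)%:R : rat) != 0 by rewrite pnatr_eq0 -lt0n fact_gt0.
  rewrite !natrM; field; done.
rewrite (eq_bigr _ (fun s _ => E s)) -natr_sum -big_distrr /= vdu ShE.
have -> : ((r.+1 + b + m).+1 = n)%N by lia.
have -> : (k + m.+1 = n)%N by lia.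
have hC : (k.+1 * 'C(n, m) = m.+1 * 'C(n, k))%N.
  have -> : 'C(n, m) = 'C(n, k.+1).
    have -> : n = (m + k.+1)%N by lia.
    by rewrite binC.
  rewrite mul_bin_left; congr (_ * _)%N; lia.
have hC' : ('C(n, m)%:R : rat) = (m.+1)%:R * 'C(n,k)%:R / (k.+1)%:R.
  rewrite -natrM -hC natrM; field; by rewrite addrC natr1 pnatr_eq0.
have h1 : ('C(n, k)%:R : rat) != 0 by rewrite pnatr_eq0 -lt0n bin_gt0; lia.
have h2 : ((m`!)%:R : rat) != 0 by rewrite pnatr_eq0 -lt0n fact_gt0.
rewrite factS !natrM hC'; field.
by rewrite h1 h2 !(addrC 1) !natr1 !pnatr_eq0.
Qed.


Lemma swap_up k (u : 'I_k -> nat) v (q : 'I_k) :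
  (forall a b : 'I_k, (a < b)%N -> (u a < u b)%N) -> (forall a, u a != v) ->
  (forall a : 'I_k, (q <= a)%N = (v < u a)%N) ->
  (forall a b : 'I_k, (a < b)%N -> ((if a == q then v else u a) < (if b == q then v else u b))%N) /\
  (forall a : 'I_k, (q.+1 <= a)%N = (u q < (if a == q then v else u a))%N).
Proof.
move=> M D C; split.
  move=> a b ab; case: eqP => [ea|/eqP na]; case: eqP => [eb|/eqP nb].
  - by move: ab; rewrite ea eb ltnn.
  - subst a; have := C b; have := D b; lia.
  - subst b; have := C a; have := D a; lia.
  - exact: M.
move=> a; case: eqP => [->|/eqP na]; first by have := C q; lia.
have na' : (a : nat) != q by [].
have := M a q; have := M q a; lia.
Qed.

Lemma swap_down k (u : 'I_k -> nat) v (q : 'I_k) :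
  (forall a b : 'I_k, (a < b)%N -> (u a < u b)%N) -> (forall a, u a != v) ->
  (forall a : 'I_k, (q.+1 <= a)%N = (v < u a)%N) ->
  (forall a b : 'I_k, (a < b)%N -> ((if a == q then v else u a) < (if b == q then v else u b))%N) /\
  (forall a : 'I_k, (q <= a)%N = (u q < (if a == q then v else u a))%N).
Proof.
move=> M D C; split.
  move=> a b ab; case: eqP => [ea|/eqP na]; case: eqP => [eb|/eqP nb].
  - by move: ab; rewrite ea eb ltnn.
  - subst a; have := C b; have := D b; lia.
  - subst b; have := C a; have := D a; lia.
  - exact: M.
move=> a; case: eqP => [->|/eqP na]; first by have := C q; have := D q; lia.
have na' : (a : nat) != q by [].
have := M a q; have := M q a; lia.
Qed.

Lemma compat_ex n k (beta : 'I_k -> 'I_n) (i : 'I_n) : (k < n)%N -> injective beta ->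
  exists s : {perm 'I_n}, compatible beta s.
Proof.
move=> kn bi.
pose L := map beta (enum 'I_k) ++ enum [predC codom beta].
have sL : size L = n.
  rewrite size_cat size_map size_enum_ord -cardE.
  have := cardC [pred x | x \in codom beta].
  have -> : #|[pred x | x \in codom beta]| = k 
    by rewrite -[RHS](card_ord k) -(card_codom bi); apply: eq_card.
  have h2 : #|[predC codom beta]| = #|[predC [pred x | x \in codom beta]]|.
    by apply: eq_card => x; rewrite !inE.
  have h3 := card_ord n; move=> h1; by rewrite h2 h1 card_ord.
have uL : uniq L.
  rewrite cat_uniq (map_inj_uniq bi) !enum_uniq andbT /=.
  apply/hasPn => x; rewrite mem_enum inE => nx; apply: contra nx; by rewrite codomE.
pose f := fun x : 'I_n => nth i L x.
have fi : injective f.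
  by move=> x y /eqP; rewrite /f nth_uniq ?sL // => /eqP; exact: val_inj.
have kn' : (k <= n)%N by apply: ltnW.
have E : forall c : 'I_k, (perm fi)^-1%g (beta c) = widen_ord kn' c.
  move=> c; have : perm fi (widen_ord kn' c) = beta c.
    rewrite permE /f /= nth_cat size_map size_enum_ord ltn_ord (nth_map c) ?size_enum_ord //.
    by rewrite nth_ord_enum.
  by move<-; rewrite permK.
exists (perm fi)^-1%g.
apply/forallP => a; apply/forallP => b; apply/implyP => ab.
by rewrite !E.
Qed.

Definition Hs n k (beta : 'I_k -> 'I_n) (i : 'I_n) (q : nat) :=
  [set s : {perm 'I_n} | compatible beta s && [forall a : 'I_k, (q <= a)%N ==> (s i < s (beta a))%N]].
Definition Cs n k (beta : 'I_k -> 'I_n) (i : 'I_n) (q : nat) :=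
  [set s : {perm 'I_n} | compatible beta s && [forall a : 'I_k, (q <= a)%N == (s i < s (beta a))%N]].
Definition swp n k (beta : 'I_k -> 'I_n) (i : 'I_n) (q : 'I_k) (s : {perm 'I_n}) :=
  (s * tperm (s i) (s (beta q)))%g.

Lemma compatP n k (beta : 'I_k -> 'I_n) (s : {perm 'I_n}) :
  reflect (forall a b : 'I_k, (a < b)%N -> (s (beta a) < s (beta b))%N) (compatible beta s).
Proof.
apply: (iffP forallP) => [H a b ab | H a].
  by have /forallP/(_ b)/implyP := H a; apply.
by apply/forallP => b; apply/implyP; exact: H.
Qed.

Lemma compat_le n k (beta : 'I_k -> 'I_n) (s : {perm 'I_n}) : compatible beta s ->
  forall a b : 'I_k, (a <= b)%N -> (s (beta a) <= s (beta b))%N.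
Proof.
move/compatP=> M a b ab; case: (ltngtP a b) => [/M/ltnW //|| e].
  by move=> ba; move: ab; rewrite leqNgt ba.
by rewrite (val_inj e).
Qed.

Lemma H0C0 n k (beta : 'I_k -> 'I_n) i : Hs beta i 0 = Cs beta i 0.
Proof.
apply/setP => s; rewrite !inE; congr (_ && _); apply: eq_forallb => a.
Qed.

Lemma Hstep n k (beta : 'I_k -> 'I_n) i q : (q < k)%N ->
  #|Hs beta i q.+1| = (#|Hs beta i q| + #|Cs beta i q.+1|)%N.
Proof.
move=> qk; pose qo := Ordinal qk.
have U : Hs beta i q.+1 = Hs beta i q :|: Cs beta i q.+1.
  apply/setP => s; rewrite !inE; case: (boolP (compatible beta s)) => c //=.
  have Mle := compat_le c.
  apply/idP/idP.
    move=> /forallP H; case: (boolP (s i < s (beta qo))%N) => hq.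
      apply/orP; left; apply/forallP => a; apply/implyP => qa.
      case: (ltngtP q a) => [qa'|aq|e]; first by have /implyP := H a; apply.
        by move: qa; rewrite leqNgt aq.
      have -> : a = qo by apply: val_inj; rewrite /= e.
      done.
    apply/orP; right; apply/forallP => a; apply/eqP.
    case: (leqP q.+1 a) => qa; first by have /implyP := H a; move=> /(_ qa) ->.
    have := Mle a qo qa; move: hq => /=; lia.
  move=> /orP [/forallP H | /forallP H]; apply/forallP => a; apply/implyP => qa.
    by have /implyP := H a; apply; apply: ltnW.
  by rewrite -(eqP (H a)).
have I : Hs beta i q :&: Cs beta i q.+1 = set0.
  apply/setP => s; rewrite !inE; apply/negbTE.
  apply/negP => /andP [/andP [_ /forallP H1] /andP [_ /forallP H2]].
  have h1 := H1 qo; have h2 := H2 qo; move: h1 h2 => /=; lia.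
by have := cardsUI (Hs beta i q) (Cs beta i q.+1); rewrite -U I cards0 addn0.
Qed.



Lemma swp_i n k (beta : 'I_k -> 'I_n) i q s : swp beta i q s i = s (beta q).
Proof. by rewrite /swp permM tpermL. Qed.

Lemma swp_b n k (beta : 'I_k -> 'I_n) i q s : injective beta -> (forall a, beta a != i) ->
  forall a, swp beta i q s (beta a) = if a == q then s i else s (beta a).
Proof.
move=> bi bn a; rewrite /swp permM; case: eqP => [->|/eqP na]; first by rewrite tpermR.
rewrite tpermD // (inj_eq perm_inj) //; first by rewrite eq_sym.
by rewrite (inj_eq bi) eq_sym.
Qed.

Lemma swpK n k (beta : 'I_k -> 'I_n) i q : injective beta -> (forall a, beta a != i) ->
  involutive (swp beta i q).
Proof.
move=> bi bn s; rewrite {1}/swp swp_i swp_b // eqxx /swp tpermC -mulgA tperm2 mulg1 //.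
Qed.

Lemma swp_up n k (beta : 'I_k -> 'I_n) i (q : 'I_k) s : injective beta -> (forall a, beta a != i) ->
  s \in Cs beta i q -> swp beta i q s \in Cs beta i q.+1.
Proof.
move=> bi bn; rewrite !inE => /andP [/compatP M /forallP C].
have D : forall a, s (beta a) != s i by move=> a; rewrite (inj_eq perm_inj).
have [M' C'] := swap_up M D (fun a => eqP (C a)).
apply/andP; split.
  by apply/compatP => a b ab; rewrite !swp_b //; move: (M' a b ab); case: (a == q); case: (b == q).
by apply/forallP => a; rewrite swp_i swp_b //; apply/eqP; move: (C' a); case: (a == q).
Qed.

Lemma swp_down n k (beta : 'I_k -> 'I_n) i (q : 'I_k) s : injective beta -> (forall a, beta a != i) ->
  s \in Cs beta i q.+1 -> swp beta i q s \in Cs beta i q.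
Proof.
move=> bi bn; rewrite !inE => /andP [/compatP M /forallP C].
have D : forall a, s (beta a) != s i by move=> a; rewrite (inj_eq perm_inj).
have [M' C'] := swap_down M D (fun a => eqP (C a)).
apply/andP; split.
  by apply/compatP => a b ab; rewrite !swp_b //; move: (M' a b ab); case: (a == q); case: (b == q).
by apply/forallP => a; rewrite swp_i swp_b //; apply/eqP; move: (C' a); case: (a == q).
Qed.

Lemma Cstep n k (beta : 'I_k -> 'I_n) i q : injective beta -> (forall a, beta a != i) ->
  (q < k)%N -> #|Cs beta i q| = #|Cs beta i q.+1|.
Proof.
move=> bi bn qk; pose qo := Ordinal qk.
have inj := can_inj (@swpK _ _ beta i qo bi bn).
apply/eqP; rewrite eqn_leq; apply/andP; split.
  rewrite -(card_imset (Cs beta i q) inj); apply: subset_leq_card.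
  apply/subsetP => x /imsetP [s hs ->]; exact: (swp_up (q:=qo)).
rewrite -(card_imset (Cs beta i q.+1) inj); apply: subset_leq_card.
apply/subsetP => x /imsetP [s hs ->]; exact: (swp_down (q:=qo)).
Qed.

Lemma Ccard n k (beta : 'I_k -> 'I_n) i q : injective beta -> (forall a, beta a != i) ->
  (q <= k)%N -> #|Cs beta i q| = #|Cs beta i 0|.
Proof.
move=> bi bn; elim: q => [//|q IH] qk.
by rewrite -(Cstep bi bn qk) IH // ltnW.
Qed.

Lemma Hcard n k (beta : 'I_k -> 'I_n) i q : injective beta -> (forall a, beta a != i) ->
  (q <= k)%N -> #|Hs beta i q| = (q.+1 * #|Cs beta i 0|)%N.
Proof.
move=> bi bn; elim: q => [|q IH] qk; first by rewrite H0C0 mul1n.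
by rewrite Hstep // IH ?(ltnW qk) // Ccard // mulSn addnC.
Qed.

Lemma Hk n k (beta : 'I_k -> 'I_n) i : Hs beta i k = [set s | compatible beta s].
Proof.
apply/setP => s; rewrite !inE; case: (compatible beta s) => //=.
by apply/forallP => a; rewrite leqNgt ltn_ord.
Qed.

Lemma Hr n k (beta : 'I_k -> 'I_n) i (r : 'I_k) :
  Hs beta i r = [set s | compatible beta s && (s i < s (beta r))%N].
Proof.
apply/setP => s; rewrite !inE; case: (boolP (compatible beta s)) => c //=.
apply/idP/idP; first by move=> /forallP /(_ r) /implyP; apply.
move=> h; apply/forallP => a; apply/implyP => ra.
have := compat_le c ra; lia.
Qed.

Theorem theorem1 (n k : nat) (r : 'I_k) (beta : 'I_k -> 'I_n) (i : 'I_n) :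
  (1 <= k)%N -> (k < n)%N -> injective beta -> (forall a : 'I_k, beta a != i) ->
  (#|[set s : {perm 'I_n} | compatible beta s && (s i < s (beta r))%N]|%:R
     / #|[set s : {perm 'I_n} | compatible beta s]|%:R : rat)
  = p n k r.
Proof.
move=> k1 kn bi bn.
rewrite p_val // -(@Hr _ _ beta i r) -(@Hk _ _ beta i) !Hcard // ?(ltnW (ltn_ord r)) //.
have [s0 hs0] := compat_ex i kn bi.
have c0 : (0 < #|Cs beta i 0|)%N.
  have : (0 < #|Hs beta i k|)%N by apply/card_gt0P; exists s0; rewrite Hk inE.
  by rewrite Hcard // muln_gt0.
have c0' : (#|Cs beta i 0|%:R : rat) != 0 by rewrite pnatr_eq0 -lt0n.
rewrite !natrM; field.
by rewrite c0' andbT addrC natr1 pnatr_eq0.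
Qed.
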